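(* Let $K$ be a field of characteristic $p>0$. Identify each $\sigma\in\mathrm{Aut}_K(P_n)$ with the $K$-automorphism $a\mapsto\sigma a\sigma^{-1}$ of $\mathcal{D}(P_n)$. Then $\mathrm{Aut}_K(P_n)=\{\tau\in\mathrm{Aut}_K(\mathcal{D}(P_n))\mid\tau(P_n)=P_n\}$, and for each $\sigma\in\mathrm{Aut}_K(P_n)$ the automorphism $a\mapsto\sigma a\sigma^{-1}$ is the only $K$-algebra automorphism of $\mathcal{D}(P_n)$ extending $\sigma$.
   Context: $P_n=K[x_1,\ldots,x_n]$; $\mathcal{D}(P_n)\subseteq\mathrm{End}_K(P_n)$ is the ring of differential operators on $P_n$, generated by $P_n$ (multiplication operators) and the operators $\partial_i^{[k]}=\partial_i^k/k!$ given by $\partial_i^{[k]}(x^m)=\binom{m_i}{k}x^{m-ke_i}$. *)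

(* Defs.v *)
From HB Require Import structures.
From mathcomp Require Import all_boot all_order all_algebra.
From mathcomp Require Import mpoly.
Set Implicit Arguments. Unset Strict Implicit. Unset Printing Implicit Defensive.
Import GRing.Theory.
Local Open Scope ring_scope.

Section DiffOps.
Variables (K : fieldType) (n : nat).
Local Notation P := {mpoly K[n]}.

Definition mulop (f : P) : P -> P := fun g => f * g.

(* divided-power derivation  d_i^[k] : x^m |-> binom(m_i, k) x^(m - k e_i),
   extended K-linearly *)
Definition dpow (i : 'I_n) (k : nat) : P -> P := fun p =>
  \sum_(m <- msupp p)
     (p@_m * ('C(m i, k))%:R) *: 'X_[(m - (U_(i) *+ k))%MM].

(* D(P_n): the K-subalgebra of End_K(P_n) generated by the multiplication
   operators and the d_i^[k] (closed also under pointwise equality). *)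
Inductive inD : (P -> P) -> Prop :=
| inD_mul f : inD (mulop f)
| inD_dpow i k : inD (dpow i k)
| inD_add a b : inD a -> inD b -> inD (fun g => a g + b g)
| inD_scale (c : K) a : inD a -> inD (fun g => c *: a g)
| inD_comp a b : inD a -> inD b -> inD (a \o b)
| inD_ext a b : inD a -> (forall g, a g = b g) -> inD b.

Definition Palg_auto (sigma sigma' : P -> P) : Prop :=
  cancel sigma sigma' /\ cancel sigma' sigma /\
  (forall f g, sigma (f + g) = sigma f + sigma g) /\
  (forall (c : K) f, sigma (c *: f) = c *: sigma f) /\
  (forall f g, sigma (f * g) = sigma f * sigma g) /\
  sigma 1 = 1.

(* K-algebra automorphism of D(P_n); tau is a map on End_K(P_n) whose
   restriction to D(P_n) is what matters *)
Definition Dalg_auto (tau : (P -> P) -> (P -> P)) : Prop :=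
  (forall a, inD a -> inD (tau a)) /\
  (forall a b, inD a -> inD b -> tau a = tau b -> a = b) /\
  (forall b, inD b -> exists2 a, inD a & tau a = b) /\
  (forall a b, inD a -> inD b ->
     tau (fun g => a g + b g) = (fun g => tau a g + tau b g)) /\
  (forall (c : K) a, inD a -> tau (fun g => c *: a g) = (fun g => c *: tau a g)) /\
  (forall a b, inD a -> inD b -> tau (a \o b) = tau a \o tau b) /\
  tau id = id.

Definition conj_op (sigma sigma' : P -> P) (a : P -> P) : P -> P :=
  sigma \o a \o sigma'.

(* tau(P_n) = P_n, with P_n viewed inside D(P_n) via multiplication operators *)
Definition preserves_P (tau : (P -> P) -> (P -> P)) : Prop :=
  (forall f, exists g, tau (mulop f) = mulop g) /\
  (forall g, exists f, tau (mulop f) = mulop g).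

End DiffOps.

(* Main.v *)
Require Import Defs.
From HB Require Import structures.
From mathcomp Require Import all_boot all_order all_algebra.
From mathcomp Require Import bigenough mpoly zify ring.
From mathcomp.multinomials Require Import ssrcomplements.
From Stdlib Require Import FunctionalExtensionality IndefiniteDescription.
Import BigEnough.
Set Implicit Arguments. Unset Strict Implicit. Unset Printing Implicit Defensive.
Import GRing.Theory.

Lemma bin_comp (m a b : nat) : ('C(m, b) * 'C(m - b, a) = 'C(a + b, a) * 'C(m, a + b))%N.
Proof.
have [lt|ge] := ltnP m (a + b).
  rewrite [X in _ = _ * X]bin_small // muln0.
  have [lt2|ge2] := ltnP m b; first by rewrite bin_small.
  by rewrite (bin_small (n := m - b)) ?muln0 // ltn_subLR // addnC.
apply/eqP; rewrite -(eqn_pmul2r (fact_gt0 (m - (a + b)))) -(eqn_pmul2r (fact_gt0 a)) -(eqn_pmul2r (fact_gt0 b)).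
have h1 := bin_fact (leq_trans (leq_addl a b) ge).
have h2 : a <= m - b by rewrite leq_subRL ?(leq_trans (leq_addl a b) ge) // addnC.
have h3 := bin_fact h2.
have h4 := bin_fact (leq_addr b a).
have h5 := bin_fact ge.
rewrite addKn in h4.
apply/eqP; rewrite -subnDA addnC in h3.
transitivity ('C(m, b) * (b`! * ('C(m - b, a) * (a`! * (m - (a + b))`!)))); first ring.
rewrite h3 h1.
transitivity ('C(m, a + b) * (('C(a + b, a) * (a`! * b`!)) * (m - (a + b))`!)); last ring.
by rewrite h4 h5.
Qed.

Lemma dvd_bin_pow (p k : nat) : prime p -> 0 < k -> p %| 'C(p ^ k * k, k).
Proof.
move=> pp k0; have lt : k < p ^ k by apply: ltn_expl; apply: prime_gt1.
apply/negPn/negP => nd.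
have cop : coprime (p ^ k) 'C(p ^ k * k, k).
  by rewrite coprime_pexpl // prime_coprime.
have e := mul_bin_diag (p ^ k * k) k.-1.
rewrite prednK // in e.
have : p ^ k %| k * 'C(p ^ k * k, k) by rewrite -e -mulnA dvdn_mulr.
rewrite Gauss_dvdl // => /dvdn_leq => /(_ k0); rewrite leqNgt lt //.
Qed.

Local Open Scope ring_scope.
Section S.
Variables (K : fieldType) (n : nat).
Local Notation P := {mpoly K[n]}.
Implicit Types (p q g : P) (m : 'X_{1..n}).
Local Notation D := (@dpow K n).

Lemma dpowwE (i : 'I_n) k p b : (msize p <= b)%N ->
  D i k p = \sum_(m : 'X_{1..n < b}) (p@_m * ('C(m i, k))%:R) *: 'X_[(m - U_(i) *+ k)%MM].
Proof.
pose I : subFinType _ := 'X_{1..n < b}.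
move=> le_pk; rewrite /dpow (big_mksub I) /=; first last.
  by move=> x /msize_mdeg_lt/leq_trans/(_ le_pk).
  by rewrite msupp_uniq.
rewrite big_rmcond //= => j /memN_msupp_eq0 ->.
by rewrite mul0r scale0r.
Qed.

Lemma dpow_is_linear i k : linear (@dpow K n i k).
Proof.
move=> c p q; pose_big_enough j; first rewrite !(dpowwE i k _ (b := j)) //.
  rewrite scaler_sumr -big_split /=; apply/eq_bigr=> m _.
  by rewrite !scalerA -scalerDl mcoeffD mcoeffZ mulrDl mulrA.
by close.
Qed.

Lemma dpowX i k m : D i k 'X_[m] = ('C(m i, k))%:R *: 'X_[(m - U_(i) *+ k)%MM].
Proof. by rewrite /dpow msuppX big_seq1 mcoeffX eqxx mul1r. Qed.

Lemma mcoeff_dpow i k m p :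
  (D i k p)@_m = p@_(m + U_(i) *+ k)%MM * ('C(m i + k, k))%:R.
Proof.
pose_big_enough j; first rewrite {2}[p](mpolywE (k := j)) //.
  rewrite !(dpowwE i k _ (b := j)) // !raddf_sum /= big_distrl /=; apply/eq_bigr.
  move=> /= [k0 /= _] _; rewrite !mcoeffZ !mcoeffX.
  case: (k0 =P m + U_(i) *+ k)%MM => [->|ne].
    rewrite addmK eqxx mnmDE mulmnE mnm1E eqxx mul1n !mulr1 //.
  rewrite mulr0 mul0r.
  have [lt|ge] := ltnP (k0 i) k; first by rewrite bin_small // mulr0 mul0r.
  case: eqP => [e|_]; last by rewrite mulr0.
  exfalso; apply: ne; rewrite -e; apply/mnmP => l.
  rewrite !(mnmDE, mnmBE, mulmnE, mnm1E); case: (i =P l) => [<-|_]; last by rewrite mul0n subn0 addn0.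
  by rewrite mul1n subnK.
by close.
Qed.

HB.instance Definition _ i k := GRing.isLinear.Build K P P *:%R (D i k) (dpow_is_linear i k).

Definition lin (F : P -> P) := forall c x y, F (c *: x + y) = c *: F x + F y.

Lemma lin0 F : lin F -> F 0 = 0.
Proof. move=> h; have e := h 1 0 0; rewrite !scale1r addr0 in e; by apply/(addrI (F 0)); rewrite addr0 -e. Qed.
Lemma linD F : lin F -> forall x y, F (x + y) = F x + F y.
Proof. by move=> h x y; have := h 1 x y; rewrite !scale1r. Qed.
Lemma linZ F : lin F -> forall c x, F (c *: x) = c *: F x.
Proof. by move=> h c x; rewrite -[c *: x]addr0 h lin0 // addr0. Qed.
Lemma linN F : lin F -> forall x, F (- x) = - F x.
Proof. by move=> h x; rewrite -scaleN1r linZ // scaleN1r. Qed.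
Lemma linB F : lin F -> forall x y, F (x - y) = F x - F y.
Proof. by move=> h x y; rewrite linD // linN. Qed.
Lemma lin_sum F (I : Type) (r : seq I) (Q : pred I) (G : I -> P) : lin F ->
  F (\sum_(j <- r | Q j) G j) = \sum_(j <- r | Q j) F (G j).
Proof.
move=> h; elim: r => [|a r IH]; first by rewrite !big_nil lin0.
by rewrite !big_cons; case: (Q a) => //; rewrite linD // IH.
Qed.

Lemma lin_ext F G : lin F -> lin G -> (forall m, F 'X_[m] = G 'X_[m]) -> forall p, F p = G p.
Proof.
move=> hF hG e; elim/mpolyind => [|c m p _ _ IH]; first by rewrite !lin0.
by rewrite hF hG e IH.
Qed.

Lemma lin_dpow i k : lin (D i k).
Proof. by move=> c x y; rewrite linearP. Qed.

Lemma dpow0 i p : D i 0 p = p.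
Proof. by apply/mpolyP => m; rewrite mcoeff_dpow mulm0n addm0 addn0 bin0 mulr1. Qed.

Lemma dpowXj i j k g : i != j -> D i k ('X_j * g) = 'X_j * D i k g.
Proof.
move=> ne; apply: (lin_ext (F := fun g => D i k ('X_j * g)) (G := fun g => 'X_j * D i k g)) => //.
- by move=> c x y; rewrite mulrDr -scalerAr lin_dpow.
- by move=> c x y; rewrite lin_dpow mulrDr -scalerAr.
move=> m; rewrite -mpolyXD !dpowX -scalerAr -mpolyXD mnmDE mnm1E eq_sym (negbTE ne) add0n.
congr (_ *: 'X_[_]); apply/mnmP => l.
rewrite !(mnmDE, mnmBE, mulmnE, mnm1E); case: (j =P l) => [<-|_].
  by rewrite (negbTE ne) mul0n !subn0.
by rewrite !add0n.
Qed.

Lemma dpowXi i k g : D i k.+1 ('X_i * g) = 'X_i * D i k.+1 g + D i k g.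
Proof.
apply: (lin_ext (F := fun g => D i k.+1 ('X_i * g)) (G := fun g => 'X_i * D i k.+1 g + D i k g)) => //.
- by move=> c x y; rewrite mulrDr -scalerAr lin_dpow.
- move=> c x y; rewrite !lin_dpow mulrDr -scalerAr scalerDr.
  by rewrite -!addrA; congr (_ + _); rewrite addrCA.
move=> m; rewrite -mpolyXD !dpowX -scalerAr -mpolyXD mnmDE mnm1E eqxx add1n binS.
have [lt|ge] := ltnP (m i) k.
  by rewrite !bin_small ?scale0r ?addr0 //; apply: ltnW.
rewrite natrD scalerDl; case: (leqP (m i) k) => [le|gt].
  have e : m i = k by apply/eqP; rewrite eqn_leq le ge.
  have E : (U_(i) + m - U_(i) *+ k.+1 = m - U_(i) *+ k)%MM.
    apply/mnmP => l; rewrite !(mnmDE, mnmBE, mulmnE, mnm1E); case: (i =P l) => [<-|_].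
      by rewrite /= e; lia.
    by rewrite !mul0n !subn0.
  by rewrite e (bin_small (ltnSn k)) !scale0r !add0r E.
have E1 : (U_(i) + (m - U_(i) *+ k.+1) = U_(i) + m - U_(i) *+ k.+1)%MM.
  apply/mnmP => l; rewrite !(mnmDE, mnmBE, mulmnE, mnm1E); case: (i =P l) => [<-|_].
    by simpl; lia.
  by rewrite !mul0n !subn0.
have E2 : (m - U_(i) *+ k = U_(i) + m - U_(i) *+ k.+1)%MM.
  apply/mnmP => l; rewrite !(mnmDE, mnmBE, mulmnE, mnm1E); case: (i =P l) => [<-|_].
    by simpl; lia.
  by rewrite !mul0n !subn0.
by rewrite E1 E2.
Qed.

Lemma dpow_comp i a b g : D i a (D i b g) = ('C(a + b, a))%:R *: D i (a + b) g.
Proof.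
apply: (lin_ext (F := fun g => D i a (D i b g)) (G := fun g => ('C(a + b, a))%:R *: D i (a + b) g)) => //.
- by move=> c x y; rewrite !lin_dpow.
- by move=> c x y; rewrite lin_dpow scalerDr !scalerA mulrC.
move=> m; rewrite !dpowX linearZ /= dpowX scalerA scalerA -natrM mnmBE mulmnE mnm1E eqxx mul1n.
have -> : (m - U_(i) *+ b - U_(i) *+ a = m - U_(i) *+ (a + b))%MM.
  apply/mnmP => l; rewrite !(mnmDE, mnmBE, mulmnE, mnm1E); case: (i =P l) => [<-|_].
    by simpl; lia.
  by rewrite !mul0n !subn0.
by rewrite -natrM bin_comp.
Qed.

Lemma dpow_msize i k g : (0 < k)%N -> g != 0 -> (msize (D i k g) < msize g)%N.
Proof.
move=> k0 g0; have sg : (0 < msize g)%N by rewrite lt0n mmeasure_poly_eq0.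
rewrite -(prednK sg) ltnS msizeE; apply/bigmax_leqP_seq => m hm _.
rewrite mcoeff_msupp mcoeff_dpow in hm.
have : (m + U_(i) *+ k)%MM \in msupp g.
  by rewrite mcoeff_msupp; apply: contraNneq hm => ->; rewrite mul0r.
move/msize_mdeg_lt; rewrite mdegD mdegMn mdeg1 mul1n => h.
rewrite -ltnS (prednK sg); lia.
Qed.

Lemma iter_dpow i k j g :
  iter j (D i k) g = (\prod_(l < j) 'C(l.+1 * k, k))%:R *: D i (j * k) g.
Proof.
elim: j => [|j IH]; first by rewrite big_ord0 scale1r mul0n dpow0.
rewrite iterS IH linearZ /= dpow_comp scalerA big_ord_recr /= natrM mulrC.
by rewrite mulSn addnC.
Qed.

Lemma iter_dpow0 (r : nat) i k g : r \in [pchar K] -> (0 < k)%N -> iter (r ^ k) (D i k) g = 0.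
Proof.
move=> hp k0; rewrite iter_dpow.
have pp := pcharf_prime hp.
have : (0 < r ^ k)%N by rewrite expn_gt0 prime_gt0.
case e: (r ^ k)%N => [//|j] _.
rewrite big_ord_recr /= -e.
have /dvdnP [q ->] := dvd_bin_pow pp k0.
by rewrite !natrM (pcharf0 hp) !mulr0 scale0r.
Qed.

Lemma iterA_ne0 i k c : (0 < k)%N -> c != 0 ->
  forall j, iter j (fun g => D i k g + c * g) 1 != 0.
Proof.
move=> k0 c0; elim => [|j IH] /=; first exact: oner_neq0.
set F := iter j _ 1 in IH *.
have hc : (0 < msize c)%N by rewrite lt0n mmeasure_poly_eq0.
have h1 : (msize F <= msize (c * F))%N.
  by rewrite msizeM // -(prednK hc) addSn /= leq_addl.
have h2 := dpow_msize i k0 IH.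
apply/eqP => e; have e2 : c * F = - D i k F by apply/eqP; rewrite -addr_eq0 addrC e.
by move: h1; rewrite e2 mmeasureN leqNgt h2.
Qed.
End S.

Section S2.
Variables (K : fieldType) (n : nat).
Local Notation P := {mpoly K[n]}.
Local Notation op := (P -> P).
Implicit Types (p q g f : P) (m : 'X_{1..n}) (a b : op).
Local Notation D := (@dpow K n).
Local Notation lin := (@lin K n).

Definition com a f : op := fun g => a (f * g) - f * a g.

Fixpoint ord (N : nat) a : Prop :=
  match N with
  | 0 => lin a /\ forall g, a g = a 1 * g
  | N'.+1 => lin a /\ forall f, ord N' (com a f)
  end.

Lemma ord_lin N a : ord N a -> lin a.
Proof. by case: N => [[]|N []]. Qed.

Lemma lin_com a f : lin a -> lin (com a f).
Proof.
move=> h c x y; rewrite /com mulrDr -scalerAr h (linD h) !mulrDr -scalerAr scalerBr.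
by rewrite (linZ h); rewrite addrACA opprD.
Qed.

Lemma ord_ext N a b : (forall g, a g = b g) -> ord N a -> ord N b.
Proof. by move=> e; have -> : a = b by apply: functional_extensionality. Qed.

Lemma ord_mul N c : ord N (fun g => c * g).
Proof.
elim: N c => [|N IH] c /=.
  by split; [move=> d x y; rewrite mulrDr -scalerAr | move=> g; rewrite mulr1].
split; first by move=> d x y; rewrite mulrDr -scalerAr.
move=> f; apply: (ord_ext _ (IH 0)) => g; rewrite /com mul0r mulrCA subrr //.
Qed.

Lemma ord_add N a b : ord N a -> ord N b -> ord N (fun g => a g + b g).
Proof.
elim: N a b => [|N IH] a b /=.
  move=> [la ea] [lb eb]; split; last by move=> g; rewrite ea eb mulrDl.
  by move=> c x y; rewrite la lb scalerDr addrACA.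
move=> [la ea] [lb eb]; split.
  by move=> c x y; rewrite la lb scalerDr addrACA.
move=> f; apply: (ord_ext _ (IH _ _ (ea f) (eb f))) => g.
by rewrite /com mulrDr opprD addrACA.
Qed.

Lemma ord_scale N c a : ord N a -> ord N (fun g => c *: a g).
Proof.
elim: N a => [|N IH] a /=.
  move=> [la ea]; split; last by move=> g; rewrite ea scalerAl.
  by move=> d x y; rewrite la scalerDr !scalerA mulrC.
move=> [la ea]; split.
  by move=> d x y; rewrite la scalerDr !scalerA mulrC.
move=> f; apply: (ord_ext _ (IH _ (ea f))) => g.
by rewrite /com scalerBr scalerAr.
Qed.

Lemma ord_mull N c a : ord N a -> ord N (fun g => c * a g).
Proof.
elim: N a => [|N IH] a /=.
  move=> [la ea]; split; last by move=> g; rewrite ea mulrA.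
  by move=> d x y; rewrite la mulrDr scalerAr.
move=> [la ea]; split.
  by move=> d x y; rewrite la mulrDr scalerAr.
move=> f; apply: (ord_ext _ (IH _ (ea f))) => g.
by rewrite /com mulrBr mulrCA.
Qed.

Lemma ord_mulr N c a : ord N a -> ord N (fun g => a (c * g)).
Proof.
elim: N a => [|N IH] a /=.
  move=> [la ea]; split; last by move=> g; rewrite ea (ea (c * 1)) mulr1 mulrA.
  by move=> d x y; rewrite mulrDr -scalerAr la.
move=> [la ea]; split.
  by move=> d x y; rewrite mulrDr -scalerAr la.
move=> f; apply: (ord_ext _ (IH _ (ea f))) => g.
by rewrite /com mulrCA.
Qed.

Lemma ord_comp N M a b : ord N a -> ord M b -> ord (N + M) (a \o b).
Proof.
move: {2}(N + M)%N (leqnn (N + M)) => s; elim: s N M a b => [|s IH] N M a b hs ha hb.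
  have [eN eM] : N = 0%N /\ M = 0%N by lia. subst N M.
  case: (ha) => la ea; case: (hb) => lb eb; split=> [c x y|g] /=; [by rewrite lb la | by rewrite ea eb (ea (b 1)) mulrA].
case: N ha hs => [|N] ha hs.
  case: (ha) => la ea; rewrite add0n; by apply: (ord_ext _ (ord_mull (a 1) hb)) => g /=; rewrite (ea (b g)).
case: M hb hs => [|M] hb hs.
  case: (hb) => lb eb; rewrite addn0; apply: (ord_ext _ (ord_mulr (b 1) ha)) => g /=.
  by rewrite (eb g).
case: (ha) => la ea; case: (hb) => lb eb; split.
  by move=> c x y /=; rewrite lb la.
move=> f.
have h1 := IH N.+1 M a (com b f) ltac:(lia) ha (eb f).
have h2 := IH N M.+1 (com a f) b ltac:(lia) (ea f) hb.
rewrite addSnnS in h1.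
apply: (ord_ext _ (ord_add h1 h2)) => g /=.
rewrite /com (linB la) /= addrA subrK; reflexivity.
Qed.

Lemma ord_mono N a : ord N a -> ord N.+1 a.
Proof.
elim: N a => [|N IH] a /=.
  move=> [la ea]; split=> // f; split=> [|g]; first exact: lin_com.
  have z : forall h, a (f * h) - f * a h = 0.
    by move=> h; rewrite (ea (f * h)) (ea h) [f * (a 1 * h)]mulrCA subrr.
  by rewrite /com !z mul0r.
by move=> [la ea]; split=> // f; apply: IH.
Qed.

Lemma ord_mono_le N M a : (N <= M)%N -> ord N a -> ord M a.
Proof.
move=> le; rewrite -(subnK le); elim: (M - N)%N => //= k IH h; exact: ord_mono (IH h).
Qed.
End S2.

Section S3.
Variables (K : fieldType) (n : nat).
Local Notation P := {mpoly K[n]}.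
Local Notation op := (P -> P).
Implicit Types (p q g f : P) (m : 'X_{1..n}) (a b : op).
Local Notation D := (@dpow K n).
Local Notation lin := (@lin K n).
Local Notation ord := (@ord K n).
Local Notation com := (@com K n).

Lemma mpoly_gen (S : P -> Prop) : S 0 -> S 1 -> (forall j, S 'X_j) ->
  (forall f g, S f -> S g -> S (f * g)) -> (forall c f g, S f -> S g -> S (c *: f + g)) ->
  forall f, S f.
Proof.
move=> S0 S1 SX SM SD; elim/mpolyind => [//|c m p _ _ IH]; apply: SD => //.
rewrite mpolyXE_id; apply: big_ind => // i _.
by elim: (m i) => [|k IHk]; rewrite ?expr0 // exprS; apply: SM.
Qed.

Lemma com_gen a : lin a -> (forall j g, com a 'X_j g = 0) ->
  forall f g, a (f * g) = f * a g.
Proof.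
move=> la h; apply: mpoly_gen.
- by move=> g; rewrite mul0r lin0 // mul0r.
- by move=> g; rewrite !mul1r.
- by move=> j g; apply/eqP; rewrite -subr_eq0; apply/eqP; apply: h.
- by move=> f1 f2 h1 h2 g; rewrite -mulrA h1 h2 mulrA.
- move=> c f1 f2 h1 h2 g; rewrite mulrDl -scalerAl la h1 h2.
  by rewrite mulrDl scalerAl.
Qed.

Lemma ord_zero N : ord N (fun _ => 0).
Proof. by apply: (ord_ext _ (ord_mul N 0)) => g; rewrite mul0r. Qed.

Lemma ord_gen N a : lin a -> (forall j, ord N (com a 'X_j)) -> forall f, ord N (com a f).
Proof.
move=> la h; apply: mpoly_gen => //.
- by apply: (ord_ext _ (ord_zero N)) => g; rewrite /com mul0r lin0 // mul0r subrr.
- by apply: (ord_ext _ (ord_zero N)) => g; rewrite /com !mul1r subrr.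
- move=> f1 f2 h1 h2.
  apply: (ord_ext _ (ord_add (ord_mulr f2 h1) (ord_mull f1 h2))) => g.
  by rewrite /com /= mulrBr addrA subrK !mulrA.
- move=> c f1 f2 h1 h2.
  apply: (ord_ext _ (ord_add (ord_scale c h1) h2)) => g.
  rewrite /com mulrDl -scalerAl la mulrDl scalerBr -scalerAl.
  by rewrite addrACA opprD.
Qed.

Lemma ord_vanish N a : ord N a -> (forall m, (mdeg m <= N)%N -> a 'X_[m] = 0) ->
  forall g, a g = 0.
Proof.
elim: N a => [|N IH] a /=.
  move=> [la ea] h g; rewrite ea -mpolyX0 h ?mdeg0 // mul0r //.
move=> [la ea] h.
have hc : forall j g, com a 'X_j g = 0.
  move=> j; apply: IH => // m hm.
  rewrite /com -mpolyXD !h ?mulr0 ?subrr // ?mdegD ?mdeg1 //; lia.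
have := com_gen la hc => e g.
by rewrite -[g]mulr1 e -mpolyX0 h ?mdeg0 // mulr0.
Qed.
End S3.

Section S4.
Variables (K : fieldType) (n : nat).
Local Notation P := {mpoly K[n]}.
Local Notation op := (P -> P).
Implicit Types (p q g f : P) (m : 'X_{1..n}) (a b : op).
Local Notation D := (@dpow K n).
Local Notation lin := (@lin K n).
Local Notation ord := (@ord K n).
Local Notation com := (@com K n).

Lemma Palg_sym (s s' : op) : Palg_auto s s' -> Palg_auto s' s.
Proof.
move=> [c1 [c2 [hD [hZ [hM h1]]]]].
split; first by []. split; first by [].
split; first by move=> f g; apply: (can_inj c1); rewrite hD !c2.
split; first by move=> c f; apply: (can_inj c1); rewrite hZ !c2.
split; first by move=> f g; apply: (can_inj c1); rewrite hM !c2.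
by apply: (can_inj c1); rewrite h1 c2.
Qed.

Lemma Palg_lin (s s' : op) : Palg_auto s s' -> lin s.
Proof. by move=> [_ [_ [hD [hZ _]]]] c x y; rewrite hD hZ. Qed.

Lemma ord_conj N (s s' : op) a : Palg_auto s s' -> ord N a -> ord N (fun g => s (a (s' g))).
Proof.
move=> hs; have hs' := Palg_sym hs.
have [c1 [c2 [hD [hZ [hM h1]]]]] := hs; have [_ [_ [hD' [hZ' [hM' h1']]]]] := hs'.
elim: N a => [|N IH] a /=.
  move=> [la ea]; split.
    by move=> c x y; rewrite hD' hZ' la hD hZ.
  by move=> g; rewrite ea hM h1' c2.
move=> [la ea]; split.
  by move=> c x y; rewrite hD' hZ' la hD hZ.
move=> f; apply: (ord_ext _ (IH _ (ea (s' f)))) => g.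
by rewrite /com /= hM' (linB (Palg_lin hs)) hM c2.
Qed.

Lemma ord_dpow i k : ord k (D i k).
Proof.
elim: k => [|k IH] /=.
  by split=> [|g]; [exact: lin_dpow | rewrite !dpow0 mul1r].
split; first exact: lin_dpow.
apply: ord_gen; first exact: lin_dpow.
move=> j; case: (i =P j) => [<-|ne].
  by apply: (ord_ext _ IH) => g; rewrite /com dpowXi addrC addKr.
apply: (ord_ext _ (ord_zero _ _ k)) => g.
by rewrite /com dpowXj ?subrr //; apply/eqP.
Qed.

Definition Ds (s : seq 'I_n) (bt : 'X_{1..n}) : op :=
  foldr (fun i acc => D i (bt i) \o acc) id s.

Lemma ord_Ds s (bt : 'X_{1..n}) : ord (\sum_(i <- s) bt i)%N (Ds s bt).
Proof.
elim: s => [|i s IH] /=.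
  by rewrite big_nil; split=> [c x y|g] //; rewrite mul1r.
rewrite big_cons; exact: ord_comp (ord_dpow i (bt i)) IH.
Qed.

Lemma inD_Ds s (bt : 'X_{1..n}) : inD (Ds s bt).
Proof.
elim: s => [|i s IH] /=.
  by apply: (inD_ext (inD_mul 1)) => g; rewrite /mulop mul1r.
by apply: inD_comp => //; apply: inD_dpow.
Qed.

Lemma Ds_X s (bt gm : 'X_{1..n}) : uniq s -> Ds s bt 'X_[gm] =
  (\prod_(i <- s) 'C(gm i, bt i))%:R *: 'X_[(gm - \big[+%MM/0%MM]_(i <- s) (U_(i) *+ bt i))%MM].
Proof.
elim: s => [|j s IH] /=.
  by move=> _; rewrite !big_nil subm0 scale1r.
move=> /andP [js us]; rewrite IH // linearZ /= dpowX scalerA !big_cons -natrM mulnC.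
have -> : (gm - \big[+%MM/0%MM]_(i <- s) (U_(i) *+ bt i))%MM j = gm j.
  rewrite mnmBE mnm_sumE big1_seq ?subn0 //.
  move=> i /andP [_ hi].
  rewrite mulmnE mnm1E; case: (i =P j) => [e|]; last by rewrite mul0n.
  by move: js; rewrite -e hi.
by rewrite submDA addmC.
Qed.
End S4.

Section S5.
Variables (K : fieldType) (n : nat).
Local Notation P := {mpoly K[n]}.
Local Notation op := (P -> P).
Implicit Types (p q g f : P) (m : 'X_{1..n}) (a b : op).
Local Notation D := (@dpow K n).
Local Notation lin := (@lin K n).
Local Notation ord := (@ord K n).
Local Notation com := (@com K n).
Local Notation Ds := (@Ds K n).

Definition Dm (bt : 'X_{1..n}) : op := Ds (index_enum 'I_n) bt.

Lemma ord_Dm bt : ord (mdeg bt) (Dm bt).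
Proof. by rewrite mdegE; apply: ord_Ds. Qed.

Lemma inD_Dm bt : inD (Dm bt).
Proof. exact: inD_Ds. Qed.

Lemma Dm_X bt gm : (mdeg gm <= mdeg bt)%N -> Dm bt 'X_[gm] = (gm == bt)%:R.
Proof.
move=> le; rewrite /Dm Ds_X ?index_enum_uniq // -multinomUE_id.
case: (gm =P bt) => [->|ne].
  rewrite big1 => [|i _]; last exact: binn.
  have -> : (bt - bt = 0)%MM by apply/mnmP => i; rewrite mnmBE mnm0E subnn.
  by rewrite mpolyX0 !mulr1n scale1r.
case: (boolP [exists i, (gm i < bt i)%N]) => [/existsP [i hi]|/existsPn h].
  by rewrite (big_rem i) ?mem_index_enum // bin_small //= mul0n scale0r.
exfalso; apply: ne.
have lb : (bt <= gm)%MM by apply/mnm_lepP => i; move: (h i); rewrite -leqNgt.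
have e := submK lb.
have : mdeg (gm - bt)%MM = 0%N by move: le; rewrite -{1}e mdegD; lia.
move/eqP; rewrite mdeg_eq0 => /eqP e0.
by rewrite -e e0 add0m.
Qed.

Lemma inD_sum (I : Type) (r : seq I) (Q : pred I) (F : I -> op) :
  (forall i, inD (F i)) -> inD (fun g => \sum_(i <- r | Q i) F i g).
Proof.
move=> h; elim: r => [|x r IH].
  by apply: (inD_ext (inD_mul 0)) => g; rewrite big_nil /mulop mul0r.
case: (boolP (Q x)) => qx.
  by apply: (inD_ext (inD_add (h x) IH)) => g; rewrite big_cons qx.
by apply: (inD_ext IH) => g; rewrite big_cons (negbTE qx).
Qed.

Lemma ord_sum N (I : Type) (r : seq I) (Q : pred I) (F : I -> op) :
  (forall i, ord N (F i)) -> ord N (fun g => \sum_(i <- r | Q i) F i g).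
Proof.
move=> h; elim: r => [|x r IH].
  by apply: (ord_ext _ (ord_zero _ _ N)) => g; rewrite big_nil.
case: (boolP (Q x)) => qx.
  by apply: (ord_ext _ (ord_add (h x) IH)) => g; rewrite big_cons qx.
by apply: (ord_ext _ IH) => g; rewrite big_cons (negbTE qx).
Qed.

Lemma exists_approx N a : ord N a -> forall M, (M <= N.+1)%N ->
  exists b, [/\ inD b, ord N b & forall m, (mdeg m < M)%N -> b 'X_[m] = a 'X_[m]].
Proof.
move=> ha; elim => [|M IH] hM.
  exists (mulop 0); split=> //; [exact: inD_mul | exact: ord_mul].
have [b [ib ob eb]] := IH (ltnW hM).
pose e (bt : 'X_{1..n < M.+1}) := a 'X_[bt] - b 'X_[bt].
exists (fun g => b g + \sum_(bt : 'X_{1..n < M.+1} | mdeg bt == M) e bt * Dm bt g); split.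
- apply: inD_add => //; apply: inD_sum => bt.
  by apply: (inD_comp (inD_mul (e bt)) (inD_Dm bt)).
- apply: ord_add => //; apply: ord_sum => bt.
  apply: ord_mull; apply: (ord_mono_le _ (ord_Dm bt)).
  by have := bmdeg bt; rewrite ltnS => h; apply: (leq_trans h); rewrite -ltnS.
move=> m hm.
have hD : forall bt : 'X_{1..n < M.+1}, mdeg bt == M ->
    e bt * Dm bt 'X_[m] = e bt * (m == bt)%:R.
  by move=> bt /eqP hb; rewrite Dm_X // hb -ltnS.
rewrite (eq_bigr _ hD).
case: (ltnP (mdeg m) M) => lt.
  rewrite big1 ?addr0 ?eb // => bt /eqP hb; case: eqP => [e'|_]; last by rewrite mulr0.
  by move: lt; rewrite e' hb ltnn.
have hmM : mdeg m = M by apply/eqP; rewrite eqn_leq lt andbT -ltnS.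
pose bm := @BMultinom n M.+1 m hm.
rewrite (bigD1 bm) /=; last by rewrite hmM.
rewrite eqxx mulr1 big1 ?addr0.
  by rewrite /e addrC subrK.
move=> bt /andP [_ ne]; case: eqP => [e'|_]; last by rewrite mulr0.
by exfalso; move: ne; rewrite -(inj_eq val_inj) /= -e' eqxx.
Qed.

Lemma ord_inD N a : ord N a -> inD a.
Proof.
move=> ha; have [b [ib ob eb]] := exists_approx ha (leqnn N.+1).
have hv := ord_vanish (ord_add ha (ord_scale (-1) ob)).
apply: (inD_ext ib) => g; apply/eqP; rewrite eq_sym -subr_eq0 -scaleN1r.
apply/eqP; apply: hv => m hm; rewrite eb // scaleN1r subrr //.
Qed.

Lemma conj_inD (s s' : op) a : Palg_auto s s' -> inD a -> inD (fun g => s (a (s' g))).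
Proof.
move=> hs ha; have hs' := Palg_sym hs.
have [c1 [c2 [hD [hZ [hM h1]]]]] := hs; have [_ [_ [hD' [hZ' [hM' h1']]]]] := hs'.
elim: ha => [f|i k|a1 b1 _ IH1 _ IH2|c a1 _ IH|a1 b1 _ IH1 _ IH2|a1 b1 _ IH e].
- by apply: (inD_ext (inD_mul (s f))) => g; rewrite /mulop hM c2.
- exact: ord_inD (ord_conj hs (@ord_dpow K n i k)).
- by apply: (inD_ext (inD_add IH1 IH2)) => g; rewrite hD.
- by apply: (inD_ext (inD_scale c IH)) => g; rewrite hZ.
- by apply: (inD_ext (inD_comp IH1 IH2)) => g /=; rewrite c1.
- by apply: (inD_ext IH) => g; rewrite e.
Qed.
End S5.

Section S6.
Variables (K : fieldType) (n : nat).
Local Notation P := {mpoly K[n]}.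
Local Notation op := (P -> P).
Implicit Types (p q g f : P) (m : 'X_{1..n}) (a b : op).
Local Notation D := (@dpow K n).
Local Notation lin := (@lin K n).

Lemma inD_lin a : inD a -> lin a.
Proof.
elim => [f|i k|a1 b1 _ IH1 _ IH2|c a1 _ IH|a1 b1 _ IH1 _ IH2|a1 b1 _ IH e].
- by move=> c x y; rewrite /mulop mulrDr scalerAr.
- exact: lin_dpow.
- by move=> c x y; rewrite IH1 IH2 scalerDr addrACA.
- by move=> d x y; rewrite IH scalerDr !scalerA mulrC.
- by move=> c x y /=; rewrite IH2 IH1.
- by move=> c x y; rewrite -!e IH.
Qed.

Lemma conj_Dalg (s s' : op) : Palg_auto s s' ->
  Dalg_auto (conj_op s s') /\
  (forall f, conj_op s s' (mulop f) = mulop (s f)) /\ preserves_P (conj_op s s').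
Proof.
move=> hs; have hs' := Palg_sym hs.
have [c1 [c2 [hD [hZ [hM h1]]]]] := hs.
have cm : forall f, conj_op s s' (mulop f) = mulop (s f).
  by move=> f; apply: functional_extensionality => g; rewrite /conj_op /mulop /= hM c2.
split; last split=> //; last first.
  split=> f; first by exists (s f).
  by exists (s' f); rewrite cm c2.
split; first by move=> a ha; exact: conj_inD hs ha.
split.
  move=> a b _ _ e; apply: functional_extensionality => g.
  have := equal_f e (s g); rewrite /conj_op /= c1 => /(can_inj c1) //.
split.
  move=> b hb; exists (fun g => s' (b (s g))); first exact: conj_inD hs' hb.
  by apply: functional_extensionality => g; rewrite /conj_op /= c2 c2.
split.
  by move=> a b _ _; apply: functional_extensionality => g; rewrite /conj_op /= hD.
split.
  by move=> c a _; apply: functional_extensionality => g; rewrite /conj_op /= hZ.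
split.
  by move=> a b _ _; apply: functional_extensionality => g; rewrite /conj_op /= c1.
by apply: functional_extensionality => g; rewrite /conj_op /= c2.
Qed.
End S6.

Section S7.
Variables (K : fieldType) (n : nat) (r : nat) (hr : r \in [pchar K]).
Local Notation P := {mpoly K[n]}.
Local Notation op := (P -> P).
Implicit Types (p q g f : P) (m : 'X_{1..n}) (a b : op).
Local Notation D := (@dpow K n).
Local Notation lin := (@lin K n).
Local Notation com := (@com K n).

Variables (s s' : op) (tau : op -> op).
Hypotheses (hs : Palg_auto s s') (ht : Dalg_auto tau)
  (hm : forall f, tau (mulop f) = mulop (s f)).

Lemma iter_tau a N : inD a -> inD (fun g => iter N a g) /\
  tau (fun g => iter N a g) = (fun g => iter N (tau a) g).
Proof.
have [T1 [T2 [T3 [T4 [T5 [T6 T7]]]]]] := ht.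
move=> ha; elim: N => [|N [iN IH]] /=.
  by split; [apply: (inD_ext (inD_mul 1)) => g; rewrite /mulop mul1r | exact: T7].
have e : (fun g => a (iter N a g)) = a \o (fun g => iter N a g) by [].
by rewrite e; split; [exact: inD_comp | rewrite T6 // IH].
Qed.

Lemma uniq_dpow i k : tau (D i k) = conj_op s s' (D i k).
Proof.
have [T1 [T2 [T3 [T4 [T5 [T6 T7]]]]]] := ht.
have [c1 [c2 [hD [hZ [hM h1]]]]] := hs.
have hs' := Palg_sym hs.
have [_ [_ [hD' [hZ' [hM' h1']]]]] := hs'.
elim: k => [|k IH].
  have -> : D i 0 = id by apply: functional_extensionality => g; rewrite dpow0.
  by rewrite T7; apply: functional_extensionality => g; rewrite /conj_op /= c2.
set T := tau (D i k.+1).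
have iT : inD T by apply: T1; apply: inD_dpow.
have lT := inD_lin iT.
pose th g := s' (T (s g)) - D i k.+1 g.
have lth : lin th.
  move=> c x y; rewrite /th (Palg_lin hs) lT (Palg_lin hs') (@lin_dpow K n i k.+1).
  by rewrite scalerBr addrACA opprD.
have hc : forall j g, com th 'X_j g = 0.
  move=> j g; rewrite /com /th hM.
  case: (i =P j) => [<-|ne].
    have e : D i k.+1 \o mulop 'X_i = (fun g => (mulop 'X_i \o D i k.+1) g + D i k g).
      by apply: functional_extensionality => h; rewrite /= /mulop dpowXi.
    have := equal_f (congr1 tau e) (s g).
    rewrite (T6 (D i k.+1) (mulop 'X_i)); [|exact: inD_dpow|exact: inD_mul].
    rewrite (T4 (mulop 'X_i \o D i k.+1) (D i k)); [|by apply: inD_comp; [exact: inD_mul|exact: inD_dpow]|exact: inD_dpow].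
    rewrite (T6 (mulop 'X_i) (D i k.+1)); [|exact: inD_mul|exact: inD_dpow].
    rewrite hm IH /mulop /conj_op /= -/T => ->.
    rewrite hD' hM' !c1 dpowXi; ring.
  have e : D i k.+1 \o mulop 'X_j = mulop 'X_j \o D i k.+1.
    by apply: functional_extensionality => h; rewrite /= /mulop dpowXj //; apply/eqP.
  have := equal_f (congr1 tau e) (s g).
  rewrite (T6 (D i k.+1) (mulop 'X_j)); [|exact: inD_dpow|exact: inD_mul].
  rewrite (T6 (mulop 'X_j) (D i k.+1)); [|exact: inD_mul|exact: inD_dpow].
  rewrite hm /mulop /= -/T => ->.
  rewrite hM' c1 dpowXj; [ring | exact/eqP].
have e := com_gen lth hc.
set c := th 1.
have hA : forall g, s' (T (s g)) = D i k.+1 g + c * g.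
  move=> g; have := e g 1; rewrite mulr1 -/c /th => h.
  by rewrite mulrC -h addrC subrK.
have c0 : c = 0.
  apply/eqP; apply: contraT => nc.
  have := iterA_ne0 i (ltn0Sn k) nc (r ^ k.+1).
  have -> : forall N g, iter N (fun g => D i k.+1 g + c * g) g = s' (iter N T (s g)).
    by elim=> [|N IHN] g /=; rewrite ?c1 // IHN -hA c2.
  have [_ ei] := iter_tau (r ^ k.+1) (@inD_dpow K n i k.+1).
  have z : (fun g => iter (r ^ k.+1) (D i k.+1) g) = mulop 0.
    by apply: functional_extensionality => g; rewrite iter_dpow0 // /mulop mul0r.
  rewrite z hm in ei.
  have := equal_f ei (s 1); rewrite /mulop (lin0 (Palg_lin hs)) mul0r -/T => <-.
  by rewrite (lin0 (Palg_lin hs')) eqxx.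
apply: functional_extensionality => h; rewrite /conj_op /=.
have := hA (s' h); rewrite c2 c0 mul0r addr0 => <-.
by rewrite c2.
Qed.

Lemma uniq_conj a : inD a -> tau a = conj_op s s' a.
Proof.
have [T1 [T2 [T3 [T4 [T5 [T6 T7]]]]]] := ht.
have [c1 [c2 [hD [hZ [hM h1]]]]] := hs.
elim => [f|i k|a1 b1 i1 IH1 i2 IH2|c a1 i1 IH|a1 b1 i1 IH1 i2 IH2|a1 b1 i1 IH e].
- by rewrite hm; apply: functional_extensionality => g; rewrite /conj_op /mulop /= hM c2.
- exact: uniq_dpow.
- by rewrite T4 // IH1 IH2; apply: functional_extensionality => g; rewrite /conj_op /= hD.
- by rewrite T5 // IH; apply: functional_extensionality => g; rewrite /conj_op /= hZ.
- by rewrite T6 // IH1 IH2; apply: functional_extensionality => g; rewrite /conj_op /= c1.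
- have -> : b1 = a1 by apply: functional_extensionality => g; rewrite e.
  exact: IH.
Qed.
End S7.

Unset Implicit Arguments.
Set Strict Implicit.

Theorem corollary3p2 (K : fieldType) (p : nat) (hp : p \in [pchar K]) (n : nat) :
  (forall sigma sigma' : {mpoly K[n]} -> {mpoly K[n]},
     Palg_auto sigma sigma' ->
     Dalg_auto (conj_op sigma sigma') /\
     (forall f, conj_op sigma sigma' (mulop f) = mulop (sigma f)) /\
     preserves_P (conj_op sigma sigma')) /\
  (forall tau : ({mpoly K[n]} -> {mpoly K[n]}) -> ({mpoly K[n]} -> {mpoly K[n]}),
     Dalg_auto tau -> preserves_P tau ->
     exists sigma sigma', Palg_auto sigma sigma' /\
       forall a, inD a -> tau a = conj_op sigma sigma' a) /\
  (forall (sigma sigma' : {mpoly K[n]} -> {mpoly K[n]})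
          (tau : ({mpoly K[n]} -> {mpoly K[n]}) -> ({mpoly K[n]} -> {mpoly K[n]})),
     Palg_auto sigma sigma' -> Dalg_auto tau ->
     (forall f, tau (mulop f) = mulop (sigma f)) ->
     forall a, inD a -> tau a = conj_op sigma sigma' a).
Proof.
split; first exact: conj_Dalg.
split; last by move=> s s' tau hs ht hm a ha; exact: (uniq_conj hp hs ht hm ha).
move=> tau ht [hP1 hP2].
have [T1 [T2 [T3 [T4 [T5 [T6 T7]]]]]] := ht.
pose s := fun f : {mpoly K[n]} => tau (mulop f) 1.
have hm : forall f, tau (mulop f) = mulop (s f).
  move=> f; have [g eg] := hP1 f.
  by rewrite /s eg /mulop mulr1.
pose s' := fun g => proj1_sig (constructive_indefinite_description _ (hP2 g)).
have hs' : forall g, tau (mulop (s' g)) = mulop g.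
  by move=> g; rewrite /s'; case: constructive_indefinite_description.
have im : forall f, inD (@mulop K n f) by move=> f; exact: inD_mul.
have hs : Palg_auto s s'.
  split.
    move=> f; have e : tau (mulop (s' (s f))) = tau (mulop f) by rewrite hs' hm.
    by have := equal_f (T2 _ _ (im _) (im _) e) 1; rewrite /mulop !mulr1.
  split; first by move=> g; rewrite /s hs' /mulop mulr1.
  split.
    move=> f g; have e : mulop (f + g) = (fun h => mulop f h + mulop g h).
      by apply: functional_extensionality => h; rewrite /mulop mulrDl.
    by rewrite /s e T4.
  split.
    move=> c f; have e : mulop (c *: f) = (fun h => c *: mulop f h).
      by apply: functional_extensionality => h; rewrite /mulop scalerAl.
    by rewrite /s e T5.
  split.
    move=> f g; have e : mulop (f * g) = mulop f \o mulop g.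
      by apply: functional_extensionality => h; rewrite /mulop /= mulrA.
    by rewrite /s e T6 // /= -/(s g) hm /mulop mulr1.
  have e : @mulop K n 1 = id by apply: functional_extensionality => h; rewrite /mulop mul1r.
  by rewrite /s e T7.
exists s, s'; split => //.
move=> a ha; exact: (uniq_conj hp hs ht hm ha).
Qed.
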